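(* For a join doctrine $\Phi$, the following are equivalent: (i) $\omega\notin\Phi$; (ii) $\mathbb{I}=[0,1]$ (usual order) is $\Phi$-algebraic; (iii) every $\Phi$-continuous lattice is $\Phi$-algebraic.
   Context: A join doctrine is a class $\Phi$ of posets such that: (1) the one-element poset is in $\Phi$; (2) if a poset $P$ is the union of a set $\mathcal{S}$ of subposets each in $\Phi$ and $\mathcal{S}$ (ordered by inclusion) is in $\Phi$, then $P\in\Phi$; (3) if $f:P\to Q$ is monotone with cofinal image and $P\in\Phi$ then $Q\in\Phi$; (4) cofinal subposets of members of $\Phi$ are in $\Phi$. $\omega$ = natural numbers with usual order. For a poset $X$, $\Phi(X)$ is the set of lower subsets belonging (as subposets) to $\Phi$. A $\Phi$-join is a join of a subset in $\Phi$. In a complete lattice $X$: $\Downarrow x:=\bigcap\{\phi\in\Phi(X)\mid x\le\bigvee\phi\}$; $y\ll x$ iff $y\in\Downarrow x$; $x$ is $\Phi$-compact if $x\ll x$; $X$ is $\Phi$-algebraic if the smallest subset containing the $\Phi$-compact elements and closed under $\Phi$-joins is $X$; $X$ is a $\Phi$-continuous lattice if each $x$ has $\phi\in\Phi(X)$ with $\phi\subseteq\Downarrow x$ and $x\le\bigvee\phi$. *)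

(* Defs.v *)
From Stdlib Require Import Reals ProofIrrelevance FunctionalExtensionality PropExtensionality.
Open Scope R_scope.

Record poset := Poset {
  car :> Type;
  le : car -> car -> Prop;
  le_refl : forall x, le x x;
  le_trans : forall x y z, le x y -> le y z -> le x z;
  le_antisym : forall x y, le x y -> le y x -> x = y
}.
Arguments le {p} _ _.

Definition sub_poset (P : poset) (A : P -> Prop) : poset.
Proof.
refine (@Poset {x : P | A x} (fun a b => le (proj1_sig a) (proj1_sig b)) _ _ _).
- intros [x Hx]; apply le_refl.
- intros [x Hx] [y Hy] [z Hz]; simpl; apply le_trans.
- intros [x Hx] [y Hy]; simpl; intros H1 H2.
  pose proof (le_antisym _ _ _ H1 H2) as E; subst y.
  f_equal; apply proof_irrelevance.
Defined.

Definition incl_poset (P : poset) (S : (P -> Prop) -> Prop) : poset.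
Proof.
refine (@Poset {A : P -> Prop | S A}
          (fun a b => forall x, proj1_sig a x -> proj1_sig b x) _ _ _).
- intros [A HA] x; simpl; auto.
- intros [A HA] [B HB] [C HC]; simpl; auto.
- intros [A HA] [B HB]; simpl; intros H1 H2.
  assert (E : A = B).
  { apply functional_extensionality; intro x;
    apply propositional_extensionality; split; auto. }
  subst B; f_equal; apply proof_irrelevance.
Defined.

Definition one_poset : poset.
Proof.
refine (@Poset unit (fun _ _ => True) _ _ _); auto.
intros [] [] _ _; reflexivity.
Defined.

Definition omega_poset : poset.
Proof.
refine (@Poset nat Peano.le _ _ _).
- intro; apply le_n.
- intros x y z; apply PeanoNat.Nat.le_trans.
- intros x y; apply PeanoNat.Nat.le_antisymm.
Defined.

Definition unit_interval : poset.
Proof.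
refine (@Poset {r : R | 0 <= r <= 1} (fun a b => proj1_sig a <= proj1_sig b) _ _ _).
- intros [x Hx]; simpl; apply Rle_refl.
- intros [x Hx] [y Hy] [z Hz]; simpl; apply Rle_trans.
- intros [x Hx] [y Hy]; simpl; intros H1 H2.
  pose proof (Rle_antisym _ _ H1 H2) as E; subst y.
  f_equal; apply proof_irrelevance.
Defined.

Definition monotone {P Q : poset} (f : P -> Q) : Prop :=
  forall x y, le x y -> le (f x) (f y).

Definition cofinal {P : poset} (A : P -> Prop) : Prop :=
  forall x, exists y, A y /\ le x y.

Definition cofinal_image {P Q : poset} (f : P -> Q) : Prop :=
  forall q, exists p, le q (f p).

Definition join_doctrine (Phi : poset -> Prop) : Prop :=
  Phi one_poset /\
  (forall (P : poset) (S : (P -> Prop) -> Prop),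
               (forall x : P, exists A, S A /\ A x) ->
               (forall A, S A -> Phi (sub_poset P A)) ->
               Phi (incl_poset P S) -> Phi P) /\
  (forall (P Q : poset) (f : P -> Q),
               monotone f -> cofinal_image f -> Phi P -> Phi Q) /\
  (forall (P : poset) (A : P -> Prop),
               cofinal A -> Phi P -> Phi (sub_poset P A)).

Definition lower {X : poset} (A : X -> Prop) : Prop :=
  forall x y, le y x -> A x -> A y.

Definition PhiX (Phi : poset -> Prop) (X : poset) (A : X -> Prop) : Prop :=
  lower A /\ Phi (sub_poset X A).

Definition is_join {X : poset} (A : X -> Prop) (s : X) : Prop :=
  (forall a, A a -> le a s) /\ (forall u, (forall a, A a -> le a u) -> le s u).

Definition complete_lattice (X : poset) : Prop :=
  forall A : X -> Prop, exists s, is_join A s.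

Definition way_below (Phi : poset -> Prop) {X : poset} (y x : X) : Prop :=
  forall phi : X -> Prop, PhiX Phi X phi ->
    (forall s, is_join phi s -> le x s) -> phi y.

Definition Phi_compact (Phi : poset -> Prop) {X : poset} (x : X) : Prop :=
  way_below Phi x x.

Definition closed_Phi_joins (Phi : poset -> Prop) {X : poset} (C : X -> Prop) : Prop :=
  forall A : X -> Prop, (forall a, A a -> C a) -> Phi (sub_poset X A) ->
    forall s, is_join A s -> C s.

Definition Phi_algebraic (Phi : poset -> Prop) (X : poset) : Prop :=
  forall x : X, forall C : X -> Prop,
    (forall c, Phi_compact Phi c -> C c) -> closed_Phi_joins Phi C -> C x.

Definition Phi_continuous_lattice (Phi : poset -> Prop) (X : poset) : Prop :=
  complete_lattice X /\
  forall x : X, exists phi : X -> Prop, PhiX Phi X phi /\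
    (forall y, phi y -> way_below Phi y x) /\
    (forall s, is_join phi s -> le x s).

(* Main.v *)
Require Import Defs.
From Stdlib Require Import Reals Lra Lia ProofIrrelevance FunctionalExtensionality PropExtensionality Classical ClassicalEpsilon.
Open Scope R_scope.

Lemma sig_eq {A : Type} {P : A -> Prop} (a b : {x | P x}) :
  proj1_sig a = proj1_sig b -> a = b.
Proof. destruct a, b; simpl; intros ->; f_equal; apply proof_irrelevance. Qed.

Lemma Phi_surj (Phi : poset -> Prop) (HPhi : join_doctrine Phi) (P Q : poset) (f : P -> Q) :
  monotone f -> (forall q, exists p, f p = q) -> Phi P -> Phi Q.
Proof.
  destruct HPhi as [_ [_ [H3 _]]]. intros Hm Hs HP. apply (H3 P Q f Hm); auto.
  intro q. destruct (Hs q) as [p <-]. exists p. apply le_refl.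
Qed.

Lemma wb_le (Phi : poset -> Prop) (HPhi : join_doctrine Phi) (X : poset) (y x : X) :
  way_below Phi y x -> le y x.
Proof.
  intro H. apply (H (fun w => le w x)).
  - split.
    + intros a b hba hab. eapply le_trans; eauto.
    + destruct HPhi as [H1 [_ [H3 _]]].
      apply (H3 one_poset (sub_poset X (fun w => le w x)) (fun _ => exist (fun w => le w x) x (le_refl _ x))).
      * intros a b _. apply le_refl.
      * intro q. exists tt. exact (proj2_sig q).
      * exact H1.
  - intros s [Hs _]. apply Hs. apply le_refl.
Qed.

Lemma wb_down (Phi : poset -> Prop) (X : poset) (y' y x : X) :
  le y' y -> way_below Phi y x -> way_below Phi y' x.
Proof.
  intros H1 H2 phi Hphi Hj. apply ((proj1 Hphi) y y' H1). apply H2; auto.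
Qed.

Lemma wb_up (Phi : poset -> Prop) (X : poset) (y x x' : X) :
  way_below Phi y x -> le x x' -> way_below Phi y x'.
Proof.
  intros H1 H2 phi Hphi Hj. apply H1; auto. intros s Hs. eapply le_trans; eauto.
Qed.

Lemma interp (Phi : poset -> Prop) (HPhi : join_doctrine Phi) (X : poset)
  (HX : Phi_continuous_lattice Phi X) (y x : X) :
  way_below Phi y x -> exists c, way_below Phi y c /\ way_below Phi c x.
Proof.
  intro Hy.
  destruct HX as [Hcl Hc].
  pose (psi := fun w : X => exists c, way_below Phi c x /\ way_below Phi w c).
  enough (psi y) by (destruct H as [c [H1 H2]]; eauto).
  destruct (Hc x) as [phx [Hphx [Hsubx Hjx]]].
  apply Hy.
  - split.
    + intros a b hba [c [h1 h2]]. exists c. split; auto. eapply wb_down; eauto.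
    + pose proof HPhi as [H1 [H2 [H3 H4]]].
      pose (Ac := fun (c : X) (w : sub_poset X psi) => way_below Phi (proj1_sig w) c).
      apply (H2 (sub_poset X psi) (fun A => exists c, way_below Phi c x /\ A = Ac c)).
      * intros [w [c [h1 h2]]]. exists (Ac c). split; eauto.
      * intros A [c [hc ->]].
        destruct (Hc c) as [phc [Hphc [Hsubc Hjc]]].
        unshelve eapply (Phi_surj Phi HPhi (sub_poset X phc) _ _); [| | | exact (proj2 Hphc)].
        -- intro w. unshelve refine (exist _ (exist _ (proj1_sig w) _) _).
           ++ exists c. split; auto. apply Hsubc. exact (proj2_sig w).
           ++ simpl. apply Hsubc. exact (proj2_sig w).
        -- intros [a ha] [b hb]; simpl; auto.
        -- intros [[w hw] hA]. simpl in hA.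
           exists (exist _ w (hA phc Hphc Hjc)). apply sig_eq. apply sig_eq. reflexivity.
      * unshelve eapply (Phi_surj Phi HPhi (sub_poset X phx) _ _); [| | | exact (proj2 Hphx)].
        -- intro c. exists (Ac (proj1_sig c)). exists (proj1_sig c). split; auto.
           apply Hsubx. exact (proj2_sig c).
        -- intros [a ha] [b hb]; simpl. intros hab w. unfold Ac. intro hw. eapply wb_up; eauto.
        -- intros [A [c [hc ->]]]. exists (exist _ c (hc phx Hphx Hjx)). apply sig_eq. reflexivity.
  - intros s [Hs1 Hs2].
    destruct (Hcl phx) as [t Ht].
    apply le_trans with t; [apply Hjx; auto|].
    apply (proj2 Ht). intros c hc.
    destruct (Hc c) as [phc [Hphc [Hsubc Hjc]]].
    destruct (Hcl phc) as [tc Htc].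
    apply le_trans with tc; [apply Hjc; auto|].
    apply (proj2 Htc). intros w hw. apply Hs1. exists c. split; auto.
Qed.

Lemma least_nat (P : nat -> Prop) : (exists n, P n) -> exists n, P n /\ forall m, P m -> (n <= m)%nat.
Proof.
  intros [n Hn]. apply NNPP; intro Hno.
  assert (forall k m, (m <= k)%nat -> ~ P m).
  { induction k; intros m Hm HP.
    - apply Hno; exists m; split; auto. intros; lia.
    - destruct (Nat.eq_dec m (S k)).
      + subst. apply Hno. exists (S k). split; auto. intros m' Hm'.
        destruct (Compare_dec.le_lt_dec (S k) m'); auto. exfalso; apply (IHk m'); auto; lia.
      + apply (IHk m); auto; lia. }
  apply (H n n); auto.
Qed.

Lemma compact_between (Phi : poset -> Prop) (HPhi : join_doctrine Phi) (Hom : ~ Phi omega_poset)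
  (X : poset) (HX : Phi_continuous_lattice Phi X) (y x : X) :
  way_below Phi y x -> exists k, Phi_compact Phi k /\ le y k /\ le k x.
Proof.
  intro Hy.
  assert (G : forall a : X, exists c, way_below Phi a x -> way_below Phi a c /\ way_below Phi c x).
  { intro a. destruct (classic (way_below Phi a x)) as [h|h].
    - destruct (interp Phi HPhi X HX a x h) as [c Hc]. exists c; auto.
    - exists a; tauto. }
  pose (g := fun a => proj1_sig (constructive_indefinite_description _ (G a))).
  assert (Hg : forall a, way_below Phi a x -> way_below Phi a (g a) /\ way_below Phi (g a) x).
  { intro a. unfold g. destruct (constructive_indefinite_description _ (G a)); simpl; auto. }
  pose (sq := fun n => Nat.iter n g y).
  assert (Hsx : forall n, way_below Phi (sq n) x).
  { induction n; simpl; auto. apply Hg; auto. }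
  assert (Hst : forall n, way_below Phi (sq n) (sq (S n))).
  { intro n. apply (Hg (sq n) (Hsx n)). }
  assert (Hmono : forall n m, (n <= m)%nat -> le (sq n) (sq m)).
  { intros n m Hnm. induction Hnm. apply le_refl.
    eapply le_trans; [exact IHHnm|]. eapply wb_le; eauto. }
  destruct HX as [Hcl Hc].
  destruct (Hcl (fun w => exists n, w = sq n)) as [z [Hz1 Hz2]].
  exists z. split; [|split].
  3:{ apply Hz2. intros a [n ->]. eapply wb_le; eauto. }
  2:{ apply Hz1. exists 0%nat. reflexivity. }
  destruct (Hc z) as [phz [Hphz [Hsubz Hjz]]].
  assert (Hin : forall n, phz (sq n)).
  { intro n. apply (wb_up Phi X _ _ z (Hst n)).
    - apply Hz1. exists (S n); reflexivity.
    - exact Hphz.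
    - exact Hjz. }
  destruct (classic (phz z)) as [hz|hz]. { apply Hsubz; auto. }
  exfalso. apply Hom.
  assert (Hl : forall w : sub_poset X phz, exists n, ~ le (sq n) (proj1_sig w) /\
             forall m, ~ le (sq m) (proj1_sig w) -> (n <= m)%nat).
  { intro w. apply least_nat. apply NNPP; intro Hno.
    apply hz. destruct w as [w hw]; simpl in *.
    assert (z = w).
    { apply le_antisym.
      - apply Hz2. intros a [n ->]. apply NNPP; intro. apply Hno; eauto.
      - eapply wb_le; eauto. }
    subst; auto. }
  pose (f := fun w => proj1_sig (constructive_indefinite_description _ (Hl w))).
  assert (Hf : forall w, ~ le (sq (f w)) (proj1_sig w) /\
             forall m, ~ le (sq m) (proj1_sig w) -> (f w <= m)%nat).
  { intro w. unfold f. destruct (constructive_indefinite_description _ (Hl w)); simpl; auto. }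
  pose proof HPhi as [_ [_ [H3 _]]].
  apply (H3 (sub_poset X phz) omega_poset f).
  - intros a b hab. simpl. apply (proj2 (Hf a)). intro h. apply (proj1 (Hf b)).
    eapply le_trans; [exact h| exact hab].
  - intro q. exists (exist _ (sq q) (Hin q)). simpl.
    destruct (Compare_dec.le_lt_dec q (f (exist _ (sq q) (Hin q)))) as [h|h]; auto.
    exfalso. apply (proj1 (Hf (exist _ (sq q) (Hin q)))). simpl. apply Hmono. lia.
  - exact (proj2 Hphz).
Qed.

Lemma partD (Phi : poset -> Prop) (HPhi : join_doctrine Phi) (Hom : ~ Phi omega_poset)
  (X : poset) (HX : Phi_continuous_lattice Phi X) : Phi_algebraic Phi X.
Proof.
  intros x C Hcomp Hclosed.
  pose proof HX as [Hcl Hc].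
  destruct (Hc x) as [phx [Hphx [Hsubx Hjx]]].
  pose proof HPhi as [_ [_ [_ H4]]].
  assert (Hcof : forall w, phx w -> exists k, phx k /\ Phi_compact Phi k /\ le w k).
  { intros w hw. destruct (compact_between Phi HPhi Hom X HX w x (Hsubx w hw)) as [k [hk [h1 h2]]].
    exists k. split; auto. apply (wb_up Phi X k k x hk h2); auto. }
  apply (Hclosed (fun k => phx k /\ Phi_compact Phi k)).
  - intros a [_ h]; auto.
  - unshelve eapply (Phi_surj Phi HPhi (sub_poset (sub_poset X phx) (fun w => Phi_compact Phi (proj1_sig w)))).
    + intros [[k hk] hc]. exists k. split; auto.
    + intros [[a ha] hca] [[b hb] hcb]; simpl; auto.
    + intros [k [hk hc]]. exists (exist _ (exist _ k hk) hc). reflexivity.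
    + apply H4; [|exact (proj2 Hphx)].
      intros [w hw]. destruct (Hcof w hw) as [k [hk [hc hwk]]].
      exists (exist _ k hk). split; auto.
  - split.
    + intros a [ha _]. eapply wb_le; eauto.
    + intros u Hu. destruct (Hcl phx) as [t Ht].
      apply le_trans with t; [apply Hjx; auto|].
      apply (proj2 Ht). intros w hw. destruct (Hcof w hw) as [k [hk [hc hwk]]].
      eapply le_trans; [exact hwk|]. apply Hu; auto.
Qed.

Definition val (a : unit_interval) : R := proj1_sig a.
Lemma val_ge0 a : 0 <= val a. Proof. destruct a as [r h]; simpl; lra. Qed.
Lemma val_le1 a : val a <= 1. Proof. destruct a as [r h]; simpl; lra. Qed.
Lemma ui_le (a b : unit_interval) : le a b <-> val a <= val b.
Proof. reflexivity. Qed.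
Definition mk (r : R) (h : 0 <= r <= 1) : unit_interval := exist _ r h.
Lemma val_mk r h : val (mk r h) = r. Proof. reflexivity. Qed.

Lemma ui_join (A : unit_interval -> Prop) : exists s, is_join A s.
Proof.
  destruct (classic (exists a, A a)) as [[a0 ha0]|hn].
  - pose (E := fun r => exists a, A a /\ val a = r).
    assert (Hb : bound E). { exists 1. intros r [a [_ <-]]. apply val_le1. }
    assert (He : exists r, E r). { exists (val a0); unfold E; eauto. }
    destruct (completeness E Hb He) as [s [Hs1 Hs2]].
    + assert (h : 0 <= s <= 1).
      { split. apply Rle_trans with (val a0). apply val_ge0. exact (Hs1 _ (ex_intro _ a0 (conj ha0 eq_refl))).
        apply Hs2. intros r [a [_ <-]]. apply val_le1. }
      exists (mk s h). split.
      * intros a ha. apply ui_le. rewrite val_mk. exact (Hs1 _ (ex_intro _ a (conj ha eq_refl))).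
      * intros u Hu. apply ui_le. rewrite val_mk. apply Hs2. intros r [a [ha <-]].
        apply ui_le, Hu; auto.
  - assert (h : 0 <= 0 <= 1) by lra. exists (mk 0 h). split.
    + intros a ha; exfalso; eauto.
    + intros u _. apply ui_le. rewrite val_mk. apply val_ge0.
Qed.

Lemma ui_join_lub (A : unit_interval -> Prop) s : is_join A s -> (exists a, A a) ->
  forall t, (forall a, A a -> val a <= t) -> val s <= t.
Proof.
  intros [Hs1 Hs2] [a0 ha0] t Ht.
  destruct (Rle_lt_dec 1 t). { pose proof (val_le1 s); lra. }
  destruct (Rle_lt_dec 0 t) as [h0|h0].
  - assert (h : 0 <= t <= 1) by lra.
    apply (ui_le s (mk t h)). apply Hs2. intros a ha. apply ui_le. rewrite val_mk. auto.
  - pose proof (Ht a0 ha0). pose proof (val_ge0 a0). lra.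
Qed.

Lemma up_mono r1 r2 : r1 <= r2 -> (up r1 <= up r2)%Z.
Proof.
  intro H. destruct (archimed r1) as [a1 b1]. destruct (archimed r2) as [a2 b2].
  destruct (Z.le_gt_cases (up r1) (up r2)) as [h|h]; auto.
  assert (h' : (up r2 <= up r1 - 1)%Z) by lia.
  apply IZR_le in h'. rewrite minus_IZR in h'. lra.
Qed.

Lemma IZR_nat z n : INR n < IZR z -> (n <= Z.to_nat z)%nat.
Proof.
  intro H. rewrite INR_IZR_INZ in H. apply lt_IZR in H. lia.
Qed.

Lemma frac c n : 0 < c -> 0 < c / (INR n + 1) <= c.
Proof.
  intro Hc. pose proof (pos_INR n). split.
  - apply Rdiv_lt_0_compat; lra.
  - unfold Rdiv. rewrite <- (Rmult_1_r c) at 2. apply Rmult_le_compat_l; [lra|].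
    rewrite <- Rinv_1. apply Rinv_le_contravar; lra.
Qed.

Lemma lowc (Phi : poset -> Prop) (HPhi : join_doctrine Phi) (Hom : Phi omega_poset) c :
  0 < c <= 1 -> Phi (sub_poset unit_interval (fun y => val y < c)).
Proof.
  intro Hc. pose proof HPhi as [_ [_ [H3 _]]].
  assert (Hp : forall n, 0 <= c - c / (INR n + 1) <= 1 /\ c - c / (INR n + 1) < c).
  { intro n. pose proof (frac c n (proj1 Hc)). lra. }
  apply (H3 omega_poset (sub_poset unit_interval (fun y => val y < c)) (fun n => exist (fun y => val y < c) (mk _ (proj1 (Hp n))) (proj2 (Hp n)))).
  - intros n m Hnm. simpl in Hnm. simpl.
    assert (c / (INR m + 1) <= c / (INR n + 1)).
    { unfold Rdiv. apply Rmult_le_compat_l; [lra|]. apply Rinv_le_contravar.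
      pose proof (pos_INR n); lra. apply le_INR in Hnm. lra. }
    lra.
  - intros [q hq]. simpl.
    pose (r := c / (c - val q)).
    pose proof (val_ge0 q).
    assert (Hr : r * (c - val q) = c) by (unfold r; field; lra).
    assert (Hr0 : 0 < r) by (unfold r; apply Rdiv_lt_0_compat; lra).
    destruct (archimed r) as [a1 _].
    exists (Z.to_nat (up r)).
    change (val q <= c - c / (INR (Z.to_nat (up r)) + 1)).
    set (k := INR (Z.to_nat (up r)) + 1).
    assert (Hk : r <= k).
    { unfold k. rewrite INR_IZR_INZ. rewrite Znat.Z2Nat.id.
      lra. apply le_IZR. lra. }
    assert (c / k <= c - val q).
    { apply Rmult_le_reg_r with k; [lra|].
      replace (c / k * k) with c by (field; lra). nra. }
    lra.
  - exact Hom.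
Qed.

Lemma lowc_join c s : 0 < c <= 1 -> is_join (fun y => val y < c) s -> c <= val s.
Proof.
  intros Hc [Hs1 _]. destruct (Rle_lt_dec c (val s)) as [h|h]; auto.
  pose proof (val_ge0 s).
  assert (hy : 0 <= (val s + c) / 2 <= 1) by lra.
  assert (Hm : val (mk _ hy) <= val s) by (apply ui_le, Hs1; rewrite val_mk; lra).
  rewrite val_mk in Hm. lra.
Qed.
Lemma ui_le1 (a b : unit_interval) : le a b -> val a <= val b.
Proof. exact (fun h => h). Qed.

Lemma lowc_PhiX (Phi : poset -> Prop) (HPhi : join_doctrine Phi) (Hom : Phi omega_poset) c :
  0 < c <= 1 -> PhiX Phi unit_interval (fun y => val y < c).
Proof.
  intro Hc. split.
  - intros a b hba ha. apply ui_le1 in hba. lra.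
  - apply lowc; auto.
Qed.

Lemma partA (Phi : poset -> Prop) (HPhi : join_doctrine Phi) (Hom : Phi omega_poset) :
  ~ Phi_algebraic Phi unit_interval.
Proof.
  intro Halg.
  assert (h1 : 0 <= 1 <= 1) by lra.
  assert (H := Halg (mk 1 h1) (fun a => val a = 0)).
  cbv beta in H. rewrite val_mk in H.
  assert (1 <> 0) by lra. apply H0; apply H; clear H H0.
  - intros c Hc. pose proof (val_ge0 c).
    destruct (Rle_lt_dec (val c) 0) as [h|h]; [lra|].
    exfalso.
    assert (Hcc : val c < val c).
    { apply (Hc (fun y => val y < val c)).
      - apply lowc_PhiX; auto. split; auto. apply val_le1.
      - intros s Hs. apply ui_le. apply lowc_join; auto. split; auto. apply val_le1. }
    lra.
  - intros A HA _ s [Hs1 Hs2].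
    assert (h0 : 0 <= 0 <= 1) by lra.
    assert (Hm : val s <= val (mk 0 h0)).
    { apply ui_le, Hs2. intros a ha. apply ui_le. rewrite val_mk, HA; auto. lra. }
    rewrite val_mk in Hm. pose proof (val_ge0 s). lra.
Qed.

Lemma partB (Phi : poset -> Prop) (HPhi : join_doctrine Phi) (Hom : ~ Phi omega_poset) :
  Phi_algebraic Phi unit_interval.
Proof.
  intros x C Hc Hcl.
  destruct (classic (Phi_compact Phi x)) as [h|hn]; auto.
  unfold Phi_compact, way_below in hn.
  apply not_all_ex_not in hn. destruct hn as [phi hn].
  apply imply_to_and in hn. destruct hn as [Hphi hn].
  apply imply_to_and in hn. destruct hn as [Hj hnx].
  destruct (classic (exists a, phi a)) as [hne|hemp].
  - exfalso. apply Hom.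
    destruct (ui_join phi) as [s Hs].
    assert (Hxs := Hj s Hs). apply ui_le1 in Hxs.
    assert (Hlt : forall a, phi a -> val a < val s).
    { intros a ha. assert (h := proj1 Hs a ha). apply ui_le1 in h.
      destruct h as [h|h]; auto. exfalso. apply hnx.
      apply ((proj1 Hphi) a x); auto. apply ui_le. lra. }
    pose proof HPhi as [_ [_ [H3 _]]].
    apply (H3 (sub_poset unit_interval phi) omega_poset
             (fun w => Z.to_nat (up (/ (val s - val (proj1_sig w)))))).
    + intros [a ha] [b hb] hab. simpl. change (val a <= val b) in hab.
      pose proof (Hlt a ha). pose proof (Hlt b hb).
      assert (h : (up (/ (val s - val a)) <= up (/ (val s - val b)))%Z).
      { apply up_mono. apply Rinv_le_contravar; lra. }
      lia.
    + intro n.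
      pose (t := val s - / (INR n + 1)).
      assert (Hpos : 0 < / (INR n + 1)).
      { apply Rinv_0_lt_compat. pose proof (pos_INR n). lra. }
      assert (Hex : exists a, phi a /\ ~ val a <= t).
      { apply NNPP; intro Hno.
        assert (val s <= t).
        { apply (ui_join_lub phi s Hs hne). intros a ha.
          apply NNPP; intro hh. apply Hno. eauto. }
        unfold t in H. lra. }
      destruct Hex as [a [ha hat]].
      exists (exist _ a ha). simpl.
      apply IZR_nat.
      destruct (archimed (/ (val s - val a))) as [a1 _].
      assert (HH : INR n + 1 < / (val s - val a)).
      { pose proof (Hlt a ha).
        rewrite <- (Rinv_inv (INR n + 1)).
        apply Rinv_lt_contravar.
        - apply Rmult_lt_0_compat; lra.
        - unfold t in hat. lra. }
      lra.
    + exact (proj2 Hphi).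
  - apply (Hcl phi).
    + intros a ha; exfalso; eauto.
    + exact (proj2 Hphi).
    + split.
      * intros a ha; exfalso; eauto.
      * intros u _. destruct (ui_join phi) as [s Hs].
        assert (Hxs := Hj s Hs). apply ui_le1 in Hxs.
        assert (h0 : 0 <= 0 <= 1) by lra.
        assert (Hm : val s <= val (mk 0 h0)).
        { apply ui_le, (proj2 Hs). intros a ha; exfalso; eauto. }
        rewrite val_mk in Hm. apply ui_le. pose proof (val_ge0 u). lra.
Qed.

Lemma partC (Phi : poset -> Prop) (HPhi : join_doctrine Phi) (Hom : Phi omega_poset) :
  Phi_continuous_lattice Phi unit_interval.
Proof.
  split; [exact ui_join|].
  intro x. pose proof (val_ge0 x) as Hx0.
  destruct (Rle_lt_dec (val x) 0) as [hx|hx].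
  - destruct (classic (Phi (sub_poset unit_interval (fun _ => False)))) as [hE|hE].
    + exists (fun _ => False). split; [split; auto|split].
      * intros a b _ [].
      * intros y [].
      * intros s _. apply ui_le. pose proof (val_ge0 s). lra.
    + exists (fun y => val y = 0). split; [split|split].
      * intros a b hba ha. apply ui_le1 in hba. pose proof (val_ge0 b). lra.
      * assert (h0 : 0 <= 0 <= 1) by lra.
        unshelve eapply (Phi_surj Phi HPhi one_poset); [| | |exact (proj1 HPhi)].
        -- intros _. exists (mk 0 h0). reflexivity.
        -- intros a b _. apply Rle_refl.
        -- intros [a ha]. exists tt. apply sig_eq. simpl. apply sig_eq. simpl.
           unfold val in ha. auto.
      * intros y hy phi' Hphi' Hj'.
        destruct (classic (exists a, phi' a)) as [[a ha]|hno].
        -- apply ((proj1 Hphi') a y); auto. apply ui_le. rewrite hy. apply val_ge0.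
        -- exfalso. apply hE.
           unshelve eapply (Phi_surj Phi HPhi (sub_poset unit_interval phi')); [| | | exact (proj2 Hphi')].
           ++ intro w. exfalso. apply hno. exists (proj1_sig w). exact (proj2_sig w).
           ++ intros a. exfalso. apply hno. exists (proj1_sig a). exact (proj2_sig a).
           ++ intros [a []].
      * intros s _. apply ui_le. pose proof (val_ge0 s). lra.
  - assert (Hc : 0 < val x <= 1) by (split; auto; apply val_le1).
    exists (fun y => val y < val x). split; [apply lowc_PhiX; auto|split].
    + intros y hy phi' Hphi' Hj'.
      destruct (ui_join phi') as [s Hs].
      assert (Hxs := Hj' s Hs). apply ui_le1 in Hxs.
      apply NNPP; intro hn.
      assert (Hsy : le s y).
      { apply (proj2 Hs). intros a ha. apply ui_le.
        destruct (Rle_lt_dec (val a) (val y)) as [h|h]; auto.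
        exfalso. apply hn. apply ((proj1 Hphi') a y); auto. apply ui_le. lra. }
      apply ui_le1 in Hsy. lra.
    + intros s Hs. apply ui_le. apply lowc_join; auto.
Qed.

Theorem corollary2p13 (Phi : poset -> Prop) (HPhi : join_doctrine Phi) :
  (~ Phi omega_poset <-> Phi_algebraic Phi unit_interval) /\
  (Phi_algebraic Phi unit_interval <->
     forall X : poset, Phi_continuous_lattice Phi X -> Phi_algebraic Phi X).
Proof.
  split; split.
  - intro Hn. apply partB; auto.
  - intros Halg Hom. exact (partA Phi HPhi Hom Halg).
  - intros Halg X HX. apply partD; auto. intro Hom. exact (partA Phi HPhi Hom Halg).
  - intro H. destruct (classic (Phi omega_poset)) as [h|h].
    + apply H. apply partC; auto.
    + apply partB; auto.
Qed.
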